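(* Let $\langle X,d\rangle$ be a metric space. The following are equivalent: (1) $X$ is cofinally Bourbaki quasi-complete; (2) $X$ is cofinally Bourbaki complete and every CBC-regular function from $X$ to any metric space $Y$ maps cofinally Bourbaki quasi-Cauchy sequences to cofinally Bourbaki-Cauchy sequences; (3) $X$ is cofinally Bourbaki complete and every real-valued CBC-regular function on $X$ maps cofinally Bourbaki quasi-Cauchy sequences to cofinally Bourbaki-Cauchy sequences; (4) $X$ is cofinally Bourbaki complete and every cofinally Bourbaki quasi-Cauchy sequence in $X$ is cofinally Bourbaki-Cauchy.
   Context: For $\varepsilon>0$, an $\varepsilon$-chain joining $x,y$ is a finite sequence $x=x_0,\dots,x_n=y$ with consecutive distances $<\varepsilon$. A sequence $\langle x_n\rangle$ is cofinally Bourbaki quasi-Cauchy if for every $\varepsilon>0$ there is an infinite $N_\varepsilon\subseteq\mathbb{N}$ such that any $x_j,x_k$ with $j,k\in N_\varepsilon$ can be joined by an $\varepsilon$-chain; $X$ is cofinally Bourbaki quasi-complete if every such sequence has a cluster point. In a metric space $\langle Y,\rho\rangle$ let $S^1_\rho(p,\varepsilon)$ be the open $\varepsilon$-ball about $p$ and $S^{m}_\rho(p,\varepsilon)=\{y:\rho(y,S^{m-1}_\rho(p,\varepsilon))<\varepsilon\}$; a sequence $\langle y_n\rangle$ is cofinally Bourbaki-Cauchy if for every $\varepsilon>0$ there exist an infinite $N_\varepsilon\subseteq\mathbb{N}$, $m\in\mathbb{N}$, $p\in Y$ with $y_n\in S^m_\rho(p,\varepsilon)$ for all $n\in N_\varepsilon$.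 A space is cofinally Bourbaki complete if every cofinally Bourbaki-Cauchy sequence has a cluster point. A function between metric spaces is CBC-regular if it maps cofinally Bourbaki-Cauchy sequences to cofinally Bourbaki-Cauchy sequences. *)

(* Defs.v *)
From Stdlib Require Import Reals Lra Lia.
Open Scope R_scope.

Record MetricSpace := MkMetricSpace {
  carrier :> Type;
  dist : carrier -> carrier -> R;
  dist_nonneg : forall x y, 0 <= dist x y;
  dist_eq0 : forall x y, dist x y = 0 <-> x = y;
  dist_sym : forall x y, dist x y = dist y x;
  dist_tri : forall x y z, dist x z <= dist x y + dist y z
}.

Arguments dist {m} _ _.

Lemma Rdist_nonneg : forall x y : R, 0 <= Rabs (x - y).
Proof. intros; apply Rabs_pos. Qed.
Lemma Rdist_eq0 : forall x y : R, Rabs (x - y) = 0 <-> x = y.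
Proof.
  intros x y; split; intro H.
  - destruct (Req_dec (x - y) 0) as [E|E]; [lra|].
    exfalso; apply (Rabs_no_R0 _ E); exact H.
  - subst; replace (y - y) with 0 by ring; apply Rabs_R0.
Qed.
Lemma Rdist_sym : forall x y : R, Rabs (x - y) = Rabs (y - x).
Proof. intros; apply Rabs_minus_sym. Qed.
Lemma Rdist_tri : forall x y z : R, Rabs (x - z) <= Rabs (x - y) + Rabs (y - z).
Proof.
  intros; replace (x - z) with ((x - y) + (y - z)) by ring; apply Rabs_triang.
Qed.

Definition R_metric : MetricSpace :=
  MkMetricSpace R (fun x y => Rabs (x - y)) Rdist_nonneg Rdist_eq0 Rdist_sym Rdist_tri.

Section Defs.
Context {X : MetricSpace}.

Definition infinite_nat (N : nat -> Prop) : Prop :=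
  forall m : nat, exists n, (m <= n)%nat /\ N n.

Definition eps_chain (eps : R) (x y : X) : Prop :=
  exists (n : nat) (c : nat -> X),
    c O = x /\ c n = y /\ (forall i, (i < n)%nat -> dist (c i) (c (S i)) < eps).

Definition cofinally_Bourbaki_quasi_Cauchy (u : nat -> X) : Prop :=
  forall eps, 0 < eps ->
    exists N : nat -> Prop, infinite_nat N /\
      forall j k, N j -> N k -> eps_chain eps (u j) (u k).

Definition cluster_point (u : nat -> X) (x : X) : Prop :=
  forall eps, 0 < eps -> forall m : nat, exists n, (m <= n)%nat /\ dist (u n) x < eps.

Definition cofinally_Bourbaki_quasi_complete : Prop :=
  forall u : nat -> X, cofinally_Bourbaki_quasi_Cauchy u -> exists x, cluster_point u x.

(* S^m(p, eps) for m >= 1:  S^1 = open ball, S^m = {y | dist(y, S^{m-1}) < eps}.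
   "dist(y, A) < eps" (inf of distances < eps) is written out as
   "exists a in A, dist y a < eps".  The index 0 is unused (set equal to S^1). *)
Fixpoint Sm (m : nat) (p : X) (eps : R) : X -> Prop :=
  match m with
  | O => fun y => dist p y < eps
  | S O => fun y => dist p y < eps
  | S m' => fun y => exists a, Sm m' p eps a /\ dist y a < eps
  end.

Definition cofinally_Bourbaki_Cauchy (u : nat -> X) : Prop :=
  forall eps, 0 < eps ->
    exists (N : nat -> Prop) (m : nat) (p : X),
      infinite_nat N /\ (1 <= m)%nat /\ forall n, N n -> Sm m p eps (u n).

Definition cofinally_Bourbaki_complete : Prop :=
  forall u : nat -> X, cofinally_Bourbaki_Cauchy u -> exists x, cluster_point u x.

End Defs.

Arguments cofinally_Bourbaki_quasi_complete X : clear implicits.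
Arguments cofinally_Bourbaki_complete X : clear implicits.

Definition CBC_regular {X Y : MetricSpace} (f : X -> Y) : Prop :=
  forall u : nat -> X, cofinally_Bourbaki_Cauchy u ->
    cofinally_Bourbaki_Cauchy (fun n => f (u n)).

(* Main.v *)
Require Import Defs.
From Stdlib Require Import Reals.
From Stdlib Require Import Lra Lia Classical ClassicalEpsilon ZArith.
Open Scope R_scope.
Local Notation dist := Defs.dist.
Local Notation dist_sym := (@Defs.dist_sym _).
Local Notation dist_tri := (@Defs.dist_tri _).
Local Notation dist_eq0 := (@Defs.dist_eq0 _).

Lemma nat_arch (r : R) : exists n : nat, r < INR n.
Proof.
  destruct (archimed r) as [H1 _].
  destruct (Z_lt_le_dec (up r) 0) as [Hl|Hl].
  - exists 0%nat; simpl. apply IZR_lt in Hl. lra.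
  - exists (Z.to_nat (up r)). rewrite INR_IZR_INZ, Z2Nat.id by lia. lra.
Qed.

Lemma least_nat (P : nat -> Prop) : (exists n, P n) ->
  exists n, P n /\ forall k, P k -> (n <= k)%nat.
Proof.
  intros [n Hn].
  destruct (classic (exists n, P n /\ forall k, P k -> (n <= k)%nat)) as [H|H]; auto.
  exfalso.
  assert (A : forall n k, (k <= n)%nat -> ~ P k).
  { induction n0; intros k Hk Pk.
    - apply H; exists k; split; auto; intros; lia.
    - destruct (le_lt_dec k n0) as [h|h]; [exact (IHn0 k h Pk)|].
      apply H; exists k; split; auto; intros j Pj.
      destruct (le_lt_dec k j); auto. exfalso; apply (IHn0 j); auto; lia. }
  exact (A n n (le_n n) Hn).
Qed.

Lemma chain_refl (X : MetricSpace) eps (x : X) : eps_chain eps x x.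
Proof. exists 0%nat, (fun _ => x). repeat split; auto. intros; lia. Qed.

Lemma chain_step (X : MetricSpace) eps (x y : X) : dist x y < eps -> eps_chain eps x y.
Proof.
  intro H. exists 1%nat, (fun i => match i with O => x | _ => y end).
  repeat split; auto. intros i Hi. assert (i = 0%nat) by lia. subst. exact H.
Qed.

Lemma chain_sym (X : MetricSpace) eps (x y : X) : eps_chain eps x y -> eps_chain eps y x.
Proof.
  intros [n [c [H0 [Hn Hs]]]].
  exists n, (fun i => c (n - i)%nat). repeat split.
  - rewrite Nat.sub_0_r; auto.
  - rewrite Nat.sub_diag; auto.
  - intros i Hi. replace (n - i)%nat with (S (n - S i)) by lia.
    rewrite dist_sym. apply Hs. lia.
Qed.

Lemma chain_trans (X : MetricSpace) eps (x y z : X) :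
  eps_chain eps x y -> eps_chain eps y z -> eps_chain eps x z.
Proof.
  intros [n1 [c1 [H10 [H1n H1s]]]] [n2 [c2 [H20 [H2n H2s]]]].
  exists (n1 + n2)%nat, (fun i => if Nat.leb i n1 then c1 i else c2 (i - n1)%nat).
  repeat split.
  - simpl. auto.
  - destruct (Nat.leb_spec (n1 + n2) n1).
    + assert (n2 = 0%nat) by lia. subst n2. rewrite Nat.add_0_r. congruence.
    + replace (n1 + n2 - n1)%nat with n2 by lia. auto.
  - intros i Hi. destruct (Nat.leb_spec i n1); destruct (Nat.leb_spec (S i) n1).
    + apply H1s; lia.
    + assert (i = n1) by lia. subst i. rewrite H1n, <- H20.
      replace (S n1 - n1)%nat with 1%nat by lia. apply H2s; lia.
    + lia.
    + replace (S i - n1)%nat with (S (i - n1)) by lia. apply H2s; lia.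
Qed.

Lemma Sm_chain (X : MetricSpace) m (p : X) eps y : Sm m p eps y -> eps_chain eps p y.
Proof.
  revert y. induction m as [|m IH]; intros y H.
  - apply chain_step; exact H.
  - destruct m as [|m].
    + apply chain_step; exact H.
    + destruct H as [a [Ha Hd]].
      apply chain_trans with a; [apply IH; exact Ha|].
      apply chain_step. rewrite dist_sym; exact Hd.
Qed.

Lemma CBC_CBQC (X : MetricSpace) (u : nat -> X) :
  cofinally_Bourbaki_Cauchy u -> cofinally_Bourbaki_quasi_Cauchy u.
Proof.
  intros H eps Heps. destruct (H eps Heps) as [N [m [p [HN [_ Hm]]]]].
  exists N; split; auto. intros j k Hj Hk.
  apply chain_trans with p; [apply chain_sym|]; eapply Sm_chain; eauto.
Qed.

Lemma cluster_CBC (X : MetricSpace) (u : nat -> X) x :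
  cluster_point u x -> cofinally_Bourbaki_Cauchy u.
Proof.
  intros H eps Heps. exists (fun n => dist (u n) x < eps), 1%nat, x.
  split; [|split; [lia|]].
  - intro m. destruct (H eps Heps m) as [n [? ?]]. exists n; auto.
  - intros n Hn. simpl. rewrite dist_sym; exact Hn.
Qed.

Lemma Sm_dist (X : MetricSpace) m (p : X) eps y :
  Sm (S m) p eps y -> dist p y < INR (S m) * eps.
Proof.
  revert y. induction m as [|m IH]; intros y H.
  - simpl in H. simpl. lra.
  - destruct H as [a [Ha Hd]].
    specialize (IH a Ha). rewrite S_INR.
    pose proof (dist_tri p a y). rewrite (dist_sym y a) in Hd. lra.
Qed.

Lemma R_Sm m (p y eps : R) : 0 < eps -> Rabs (p - y) < INR (S m) * eps ->
  @Sm R_metric (S m) p eps y.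
Proof.
  intro Heps. revert y. induction m as [|m IH]; intros y H.
  - simpl. simpl in H. lra.
  - set (q := INR (S (S m))).
    assert (Hq : INR (S (S m)) = INR (S m) + 1) by (rewrite S_INR; auto).
    assert (Hq1 : 1 <= INR (S m)) by (apply (le_INR 1); lia).
    exists (p + (y - p) * (INR (S m) / q)). split.
    + apply IH.
      replace (p - (p + (y - p) * (INR (S m) / q))) with ((p - y) / q * INR (S m))
        by (unfold q; field; lra).
      rewrite Rabs_mult, (Rabs_pos_eq (INR (S m))) by lra.
      unfold Rdiv. rewrite Rabs_mult, (Rabs_pos_eq (/ q)).
      2:{ left; apply Rinv_0_lt_compat; unfold q; lra. }
      assert (Rabs (p - y) * / q < eps).
      { apply Rmult_lt_reg_r with q; [unfold q; lra|].
        rewrite Rmult_assoc, Rinv_l by (unfold q; lra). unfold q. lra. }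
      rewrite Rmult_comm. apply Rmult_lt_compat_l; lra.
    + change (Rabs (y - (p + (y - p) * (INR (S m) / q))) < eps). replace (y - (p + (y - p) * (INR (S m) / q))) with ((y - p) / q)
        by (unfold q; rewrite Hq; field; lra).
      unfold Rdiv. rewrite Rabs_mult, (Rabs_pos_eq (/ q)).
      2:{ left; apply Rinv_0_lt_compat; unfold q; lra. }
      apply Rmult_lt_reg_r with q; [unfold q; lra|].
      rewrite Rmult_assoc, Rinv_l by (unfold q; lra). rewrite Rabs_minus_sym.
      unfold q. lra.
Qed.

Definition Bnd (X : MetricSpace) (u : nat -> X) (x : X) (K : nat) : Prop :=
  forall n, dist x (u n) < / (INR n + 1) -> (n < K)%nat.
Definition LB (X : MetricSpace) (u : nat -> X) (x : X) (K : nat) : Prop :=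
  Bnd X u x K /\ forall K', Bnd X u x K' -> (K <= K')%nat.
Definition fbig (X : MetricSpace) (u : nat -> X) (x : X) : R :=
  INR (epsilon (inhabits 0%nat) (fun K => LB X u x K)).

Lemma fbig_spec X u x : (exists K, Bnd X u x K) ->
  LB X u x (epsilon (inhabits 0%nat) (fun K => LB X u x K)).
Proof. intro H. apply epsilon_spec. apply least_nat. exact H. Qed.

Lemma not_cluster (X : MetricSpace) (u : nat -> X) x : ~ cluster_point u x ->
  exists eps, 0 < eps /\ exists M, forall n, (M <= n)%nat -> eps <= dist (u n) x.
Proof.
  intro Hnc. apply NNPP; intro H. apply Hnc. intros eps Heps m.
  apply NNPP; intro H2. apply H. exists eps; split; auto. exists m.
  intros n Hn. apply Rnot_lt_le; intro. apply H2; exists n; auto.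
Qed.

Lemma local_bound (X : MetricSpace) (u : nat -> X) x : ~ cluster_point u x ->
  exists d, 0 < d /\ exists K, forall y, dist x y < d -> Bnd X u y K.
Proof.
  intro Hnc. destruct (not_cluster X u x Hnc) as [eps [Heps [M HM]]].
  destruct (nat_arch (2 / eps)) as [K0 HK0].
  exists (eps / 2); split; [lra|]. exists (M + K0)%nat.
  intros y Hy n Hn. destruct (lt_dec n (M + K0)) as [h|h]; auto. exfalso.
  assert (HMn := HM n ltac:(lia)).
  assert (INR K0 <= INR n) by (apply le_INR; lia).
  assert (/ (INR n + 1) < eps / 2).
  { replace (eps / 2) with (/ (2 / eps)) by (field; lra).
    apply Rinv_lt_contravar.
    - apply Rmult_lt_0_compat; [unfold Rdiv; apply Rmult_lt_0_compat; [lra|apply Rinv_0_lt_compat; lra]|].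
      pose proof (pos_INR n); lra.
    - lra. }
  pose proof (dist_tri (u n) y x). rewrite (dist_sym (u n) y), (dist_sym y x) in H1.
  lra.
Qed.

Lemma fbig_le X u x K : Bnd X u x K -> fbig X u x <= INR K.
Proof.
  intro H. unfold fbig. apply le_INR. apply (proj2 (fbig_spec X u x (ex_intro _ K H))). exact H.
Qed.

Theorem P3_P1 (X : MetricSpace) :
  cofinally_Bourbaki_complete X /\
      (forall f : X -> R_metric, CBC_regular f ->
        forall u : nat -> X, cofinally_Bourbaki_quasi_Cauchy u ->
          cofinally_Bourbaki_Cauchy (fun n => f (u n))) ->
  cofinally_Bourbaki_quasi_complete X.
Proof.
  intros [Hc Hf] u Hu. apply NNPP; intro Hnc.
  assert (Hnc' : forall x, ~ cluster_point u x) by (intros x Hx; apply Hnc; eauto).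
  set (f := fbig X u : X -> R_metric).
  assert (Hreg : CBC_regular f).
  { intros v Hv. destruct (Hc v Hv) as [x Hx].
    destruct (local_bound X u x (Hnc' x)) as [d [Hd [K HK]]].
    intros eps Heps. destruct (nat_arch (INR K / eps)) as [m0 Hm0].
    exists (fun n => dist (v n) x < d), (S m0), 0. split; [|split].
    - intro m. destruct (Hx d Hd m) as [n [? ?]]. exists n; auto.
    - lia.
    - intros n Hn. apply R_Sm; auto.
      assert (Hb : fbig X u (v n) <= INR K).
      { apply fbig_le, HK. rewrite dist_sym; exact Hn. }
      assert (H0 : 0 <= fbig X u (v n)) by apply pos_INR.
      unfold f. replace (0 - fbig X u (v n)) with (- fbig X u (v n)) by ring.
      rewrite Rabs_Ropp, Rabs_pos_eq by exact H0.
      assert (INR K < INR m0 * eps).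
      { apply Rmult_lt_reg_r with (/ eps); [apply Rinv_0_lt_compat; lra|].
        rewrite Rmult_assoc, Rinv_r by lra. unfold Rdiv in Hm0. lra. }
      rewrite S_INR. lra. }
  destruct (Hf f Hreg u Hu 1 ltac:(lra)) as [N [m [p [HN [Hm HS]]]]].
  destruct m as [|m']; [lia|].
  destruct (nat_arch (p + INR (S m'))) as [K1 HK1].
  destruct (HN K1) as [n [Hn1 Hn2]].
  pose proof (Sm_dist R_metric m' p 1 _ (HS n Hn2)) as Hd. simpl dist in Hd.
  assert (Hgt : INR n < f (u n)).
  { destruct (local_bound X u (u n) (Hnc' (u n))) as [d [Hd' [K HK]]].
    assert (Hb : Bnd X u (u n) K) by (apply HK; rewrite (proj2 (dist_eq0 _ _)); auto).
    pose proof (proj1 (fbig_spec X u (u n) (ex_intro _ K Hb))) as HL.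
    unfold f, fbig. apply lt_INR. apply HL.
    rewrite (proj2 (dist_eq0 _ _)) by auto.
    apply Rinv_0_lt_compat. pose proof (pos_INR n); lra. }
  assert (INR K1 <= INR n) by (apply le_INR; lia).
  pose proof (Rle_abs (f (u n) - p)). rewrite Rabs_minus_sym in H0. lra.
Qed.

Theorem mainTheorem9 (X : MetricSpace) :
  let P1 := cofinally_Bourbaki_quasi_complete X in
  let P2 := cofinally_Bourbaki_complete X /\
      forall (Y : MetricSpace) (f : X -> Y), CBC_regular f ->
        forall u : nat -> X, cofinally_Bourbaki_quasi_Cauchy u ->
          cofinally_Bourbaki_Cauchy (fun n => f (u n)) in
  let P3 := cofinally_Bourbaki_complete X /\
      forall f : X -> R_metric, CBC_regular f ->
        forall u : nat -> X, cofinally_Bourbaki_quasi_Cauchy u ->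
          cofinally_Bourbaki_Cauchy (fun n => f (u n)) in
  let P4 := cofinally_Bourbaki_complete X /\
      forall u : nat -> X, cofinally_Bourbaki_quasi_Cauchy u ->
        cofinally_Bourbaki_Cauchy u in
  (P1 <-> P2) /\ (P1 <-> P3) /\ (P1 <-> P4).
Proof.
  intros P1 P2 P3 P4.
  assert (H1c : P1 -> cofinally_Bourbaki_complete X).
  { intros H u Hu. apply H, CBC_CBQC, Hu. }
  assert (H12 : P1 -> P2).
  { intro H. split; [auto|]. intros Y f Hf u Hu. apply Hf.
    destruct (H u Hu) as [x Hx]. eapply cluster_CBC; eauto. }
  assert (H23 : P2 -> P3).
  { intros [Hc H]. split; [exact Hc|]. intros f; apply (H R_metric f). }
  assert (H31 : P3 -> P1) by apply P3_P1.
  assert (H14 : P1 -> P4).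
  { intro H. split; [auto|]. intros u Hu.
    destruct (H u Hu) as [x Hx]. eapply cluster_CBC; eauto. }
  assert (H41 : P4 -> P1).
  { intros [Hc H] u Hu. apply Hc, H, Hu. }
  tauto.
Qed.
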